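(* Let $m\le k\le n$ be positive integers, $\mathbf a_1,\dots,\mathbf a_n\in\mathbb R^m$. For a multiset $\mathcal R$ with support in $[n]$ let $f(\mathcal R)=[\det(\sum_{i\in\mathcal R}\mathbf a_i\mathbf a_i^\top)]^{1/m}$ (sum with multiplicity), and let $w^*=\max\{[\det(\sum_{i\in[n]}x_i\mathbf a_i\mathbf a_i^\top)]^{1/m}:\sum_ix_i=k,\ \mathbf x\in\mathbb Z_+^n\}$ be the optimal value of the $D$-optimal design problem with repetitions. Let $\hat{\mathbf x}\in\mathbb Q_+^n$ be a rational optimal solution of the relaxation $\max\{[\det(\sum_{i\in[n]}x_i\mathbf a_i\mathbf a_i^\top)]^{1/m}:\sum_ix_i=k,\ \mathbf x\in\mathbb R_+^n\}$. Algorithm A outputs the random multiset $\mathcal S$ of $k$ independent draws from $[n]$, each equal to $i$ with probability $\hat x_i/k$. Algorithm B, for a positive integer $q$ with $q\hat x_i\in\mathbb Z_+$ for all $i$, forms a collection $\mathcal A_q$ of $qk$ distinct items of which exactly $q\hat x_i$ carry label $i$, chooses a uniformly random $k$-element subset of $\mathcal A_q$, and outputs the multiset $\mathcal S_q$ of labels of the chosen items. Then, for $\mathcal T\in\{\mathcal S,\mathcal S_q\}$: (i) $(\mathbb E[(f(\mathcal T))^m])^{1/m}\ge\frac1e w^*$; (ii) for any $\epsilon\in(0,1)$, if $k\ge\frac{m-1}{\epsilon}$, then $(\mathbb E[(f(\mathcal T))^m])^{1/m}\ge(1-\epsilon)w^*$.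
   Context: $[n]=\{1,\dots,n\}$, $\mathbb Q_+$ the nonnegative rationals, $\mathbb Z_+$ the nonnegative integers, $\mathbb R_+$ the nonnegative reals. *)

(* Defs.v *)
From HB Require Import structures.
From mathcomp Require Import all_boot all_order all_algebra.
From mathcomp Require Import all_classical all_reals all_analysis.
Set Implicit Arguments. Unset Strict Implicit. Unset Printing Implicit Defensive.
Import Order.TTheory GRing.Theory Num.Theory.
Local Open Scope ring_scope.

Section Defs.
Variables (R : realType) (m n : nat) (a : 'I_n -> 'cV[R]_m).

Definition relobj (y : 'I_n -> R) : R :=
  powR (\det (\sum_(i < n) y i *: (a i *m (a i)^T))) (m%:R)^-1.

(* f(R) for a multiset R given as a sequence of labels (with multiplicity) *)
Definition fM (s : seq 'I_n) : R :=
  powR (\det (\sum_(i <- s) (a i *m (a i)^T))) (m%:R)^-1.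

(* w* : max over x in Z_+^n with sum x_i = k (each x_i <= k, so x : 'I_n -> 'I_k.+1) *)
Definition wstar (k : nat) : R :=
  \big[Num.max/0]_(x : {ffun 'I_n -> 'I_k.+1} | (\sum_(i < n) (x i : nat) == k)%N)
     relobj (fun i => (x i : nat)%:R).

Definition relax_optimal (k : nat) (x : 'I_n -> R) : Prop :=
  (forall i, 0 <= x i) /\ \sum_(i < n) x i = k%:R /\
  forall y : 'I_n -> R, (forall i, 0 <= y i) -> \sum_(i < n) y i = k%:R ->
    relobj y <= relobj x.

(* Algorithm A: k independent draws, draw j equals i with prob. x_i / k;
   E[f(S)^m] *)
Definition EA (k : nat) (x : 'I_n -> R) : R :=
  \sum_(t : {ffun 'I_k -> 'I_n})
     (\prod_(j < k) (x (t j) / k%:R)) * (fM [seq t j | j <- enum 'I_k]) ^+ m.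

(* Algorithm B: items 'I_(q*k) with labels lab; uniform random k-subset;
   E[f(S_q)^m] *)
Definition EB (k q : nat) (lab : 'I_(q * k) -> 'I_n) : R :=
  \sum_(S : {set 'I_(q * k)} | #|S| == k)
     ('C(q * k, k)%:R)^-1 * (fM [seq lab j | j <- enum S]) ^+ m.

End Defs.

(* Main.v *)
Require Import Defs.
From HB Require Import structures.
From mathcomp Require Import all_boot all_order all_algebra.
From mathcomp Require Import all_classical all_reals all_analysis.
From mathcomp Require Import ring lra zify fingroup perm.
Import Order.TTheory GRing.Theory Num.Theory.
Local Open Scope ring_scope.

Section Main.
Variables (R : realType) (m n : nat) (a : 'I_n -> 'cV[R]_m).

Definition hh (tau : 'I_m -> 'I_n) : R :=
  (\prod_(r < m) a (tau r) r 0) * \det (\matrix_(r, c) a (tau r) c 0).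

Lemma Mentry (J : finType) (w : J -> R) (g : J -> 'I_n) r c :
  (\sum_(j : J) w j *: (a (g j) *m (a (g j))^T)) r c =
  \sum_j w j * (a (g j) r 0 * a (g j) c 0).
Proof. rewrite summxE; apply: eq_bigr => j _; by rewrite !mxE big_ord1 !mxE. Qed.

Lemma det_expand (J : finType) (w : J -> R) (g : J -> 'I_n) :
  \det (\sum_(j : J) w j *: (a (g j) *m (a (g j))^T)) =
  \sum_(s : {ffun 'I_m -> J}) (\prod_(r < m) w (s r)) * hh (fun r => g (s r)).
Proof.
rewrite /determinant.
under eq_bigr => p _.
  under eq_bigr => r _ do rewrite Mentry.
  rewrite bigA_distr_bigA big_distrr /=.
  over.
rewrite exchange_big /=; apply: eq_bigr => s _.
rewrite /hh /determinant !big_distrr /=; apply: eq_bigr => p _.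
rewrite !big_split /=.
under [X in _ = _ * (_ * (_ * X))]eq_bigr => r _ do rewrite mxE.
have H : forall x y z t : R, x * (y * (z * t)) = y * (z * (x * t)) by move=> *; ring.
exact: H.
Qed.

Lemma hh_zero (tau : 'I_m -> 'I_n) r1 r2 : r1 != r2 -> tau r1 = tau r2 -> hh tau = 0.
Proof.
move=> ne eq; rewrite /hh (determinant_alternate ne) ?mulr0 // => c.
by rewrite !mxE eq.
Qed.

Lemma sum_hh_perm (tau : 'I_m -> 'I_n) :
  \sum_(p : 'S_m) hh (fun r => tau (p r)) = \det (\matrix_(r, c) a (tau r) c 0) ^+ 2.
Proof.
set V := \matrix_(r, c) a (tau r) c 0.
have Hp (p : 'S_m) : hh (fun r => tau (p r)) = ((-1) ^+ p * \prod_r V^T r (p r)) * \det V.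
  rewrite /hh.
  have -> : (\matrix_(r, c) a (tau (p r)) c 0) = row_perm p V.
    by apply/matrixP => i j; rewrite !mxE.
  rewrite row_permE det_mulmx det_perm.
  under eq_bigr => r _ do rewrite !mxE.
  by rewrite mulrA [_ * (-1) ^+ _]mulrC.
under eq_bigr => p _ do rewrite Hp.
by rewrite -big_distrl /= -det_tr /determinant expr2.
Qed.

Lemma det_psd (J : finType) (w : J -> R) (g : J -> 'I_n) :
  (forall j, 0 <= w j) ->
  0 <= \det (\sum_(j : J) w j *: (a (g j) *m (a (g j))^T)).
Proof.
move=> w0; set D := \det _.
have key : D *+ m`! = \sum_(s : {ffun 'I_m -> J}) (\prod_(r < m) w (s r)) *
     \det (\matrix_(r, c) a (g (s r)) c 0) ^+ 2.
  rewrite -card_Sn -sumr_const.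
  have Hp (p : 'S_m) : D = \sum_(s : {ffun 'I_m -> J}) (\prod_(r < m) w (s r)) *
                  hh (fun r => g (s (p r))).
    rewrite /D det_expand.
    have hinj : injective (fun s : {ffun 'I_m -> J} => [ffun r => s (p r)]).
      move=> s1 s2 /ffunP H; apply/ffunP => r.
      by have := H (p^-1 r)%g; rewrite !ffunE permKV.
    rewrite (reindex_inj hinj) /=; apply: eq_bigr => s _.
    have -> : (fun r => g ([ffun r0 => s (p r0)] r)) = (fun r => g (s (p r))).
      by apply: funext => r; rewrite ffunE.
    congr (_ * _).
    rewrite [RHS](reindex_inj (@perm_inj _ p)) /=.
    by apply: eq_bigr => r _; rewrite ffunE.
  under eq_bigr => p _ do rewrite (Hp p).
  rewrite exchange_big /=; apply: eq_bigr => s _.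
  by rewrite -big_distrr /= (sum_hh_perm (fun r => g (s r))).
have : 0 <= D *+ m`!.
  rewrite key; apply: sumr_ge0 => s _; apply: mulr_ge0; last exact: sqr_ge0.
  by apply: prodr_ge0 => r _.
by rewrite -mulr_natr pmulr_lge0 // ltr0n fact_gt0.
Qed.

Lemma indic_sum (T : finType) (x0 : T) (F : T -> R) :
  \sum_(x : T) (x == x0)%:R * F x = F x0.
Proof.
rewrite (bigD1 x0) //= eqxx mul1r big1 ?addr0 // => x /negbTE ->.
by rewrite mul0r.
Qed.

Lemma marginal (k : nat) (p : 'I_n -> R) (sig : 'I_m -> 'I_k)
    (F : {ffun 'I_m -> 'I_n} -> R) :
  injective sig -> \sum_i p i = 1 ->
  \sum_(t : {ffun 'I_k -> 'I_n}) (\prod_(j < k) p (t j)) * F [ffun r => t (sig r)] =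
  \sum_(tau : {ffun 'I_m -> 'I_n}) (\prod_(r < m) p (tau r)) * F tau.
Proof.
move=> sinj p1.
have st1 t : F [ffun r => t (sig r)] =
   \sum_(tau : {ffun 'I_m -> 'I_n})
      (\prod_(r < m) (t (sig r) == tau r)%:R) * F tau.
  rewrite (bigD1 [ffun r => t (sig r)]) //= [X in _ + X]big1 ?addr0.
    by rewrite big1 ?mul1r // => r _; rewrite ffunE eqxx.
  move=> tau /eqP ne.
  have [r Hr] : exists r, t (sig r) != tau r.
    apply/existsP; rewrite -negb_forall; apply/negP => /forallP H; apply: ne.
    by apply/ffunP => r; rewrite ffunE (eqP (H r)).
  by rewrite (bigD1 r) //= (negbTE Hr) !mul0r.
under eq_bigr => t _ do rewrite st1 big_distrr /=.
rewrite exchange_big /=; apply: eq_bigr => tau _.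
under eq_bigr => t _ do rewrite mulrA.
rewrite -big_distrl /=; congr (_ * _).
have st2 t : (\prod_(j < k) p (t j)) * \prod_(r < m) (t (sig r) == tau r)%:R =
   \prod_(j < k) (p (t j) * \prod_(r < m | sig r == j) (t j == tau r)%:R).
  rewrite big_split /=; congr (_ * _).
  rewrite (partition_big sig predT) //=; apply: eq_bigr => j _.
  by apply: eq_bigr => r /eqP <-.
under eq_bigr => t _ do rewrite st2.
rewrite -(bigA_distr_bigA (fun j i => p i * \prod_(r < m | sig r == j) (i == tau r)%:R)) /=.
rewrite [RHS](partition_big sig predT) //=; apply: eq_bigr => j _.
have [[r0 Hr0]|none] := pselect (exists r0, sig r0 = j).
  have P1 : (fun r => predT r && (sig r == j)) =1 pred1 r0.
    move=> r /=; apply/eqP/eqP => [|->//]; rewrite -Hr0; exact: sinj.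
  rewrite (big_pred1 r0 P1).
  under eq_bigr => i _ do rewrite (big_pred1 r0 P1).
  under eq_bigr => i _ do rewrite mulrC.
  exact: indic_sum.
have P0 : (fun r => predT r && (sig r == j)) =1 xpred0.
  by move=> r /=; apply/eqP => H; apply: none; exists r.
rewrite [RHS]big_pred0; last by move=> r; exact: P0 r.
rewrite -[RHS]p1; apply: eq_bigr => i _.
by rewrite big_pred0 ?mulr1 // => r; exact: P0 r.
Qed.

Lemma powpow (d : R) : 0 <= d -> (0 < m)%N -> powR d (m%:R)^-1 ^+ m = d.
Proof.
move=> d0 m0; rewrite -powR_mulrn ?powR_ge0 // -powRrM mulVf ?powRr1 //.
by rewrite pnatr_eq0 -lt0n.
Qed.

Lemma fM_map (k : nat) (t : 'I_k -> 'I_n) : (0 < m)%N ->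
  fM a [seq t j | j <- enum 'I_k] ^+ m =
  \det (\sum_(j : 'I_k) 1 *: (a (t j) *m (a (t j))^T)).
Proof.
move=> m0.
have E : \sum_(i <- [seq t j | j <- enum 'I_k]) a i *m (a i)^T =
         \sum_(j : 'I_k) 1 *: (a (t j) *m (a (t j))^T).
  by rewrite big_map big_enum /=; apply: eq_big => // j _; rewrite scale1r.
by rewrite /fM E powpow //; apply: det_psd.
Qed.

Lemma EA_eq (k : nat) (x : 'I_n -> R) : (0 < m)%N -> (0 < k)%N ->
  \sum_i x i = k%:R ->
  EA a k x = (k ^_ m)%:R * (k%:R ^+ m)^-1 *
             \det (\sum_i x i *: (a i *m (a i)^T)).
Proof.
move=> m0 k0 xs.
have kR : k%:R != 0 :> R by rewrite pnatr_eq0 -lt0n.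
set p := fun i => x i / k%:R.
have p1 : \sum_i p i = 1 by rewrite /p -mulr_suml xs divff.
rewrite /EA.
under eq_bigr => t _ do rewrite fM_map // det_expand.
under eq_bigr => t _ do rewrite big_distrr /=.
rewrite exchange_big /=.
have Dp : \sum_(tau : {ffun 'I_m -> 'I_n}) (\prod_(r < m) p (tau r)) * hh tau =
   (k%:R ^+ m)^-1 * \det (\sum_i x i *: (a i *m (a i)^T)).
  rewrite -exprVn -detZ scaler_sumr.
  under [in RHS]eq_bigr => i _ do rewrite scalerA mulrC.
  by rewrite (det_expand _ (fun i => p i) id).
under eq_bigr => sig _.
  have -> : \sum_(t : {ffun 'I_k -> 'I_n}) \prod_(j < k) (x (t j) / k%:R) *
         (\prod_(r < m) 1 * hh (fun r => t (sig r))) =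
         if injectiveb sig then (k%:R ^+ m)^-1 * \det (\sum_i x i *: (a i *m (a i)^T))
         else 0.
    case: (boolP (injectiveb sig)) => [/injectiveP sinj|/injectivePn [r1 [r2 ne eq]]].
      rewrite -Dp -(@marginal _ _ _ (fun tau => hh tau) sinj p1).
      apply: eq_bigr => t _; rewrite big1_eq mul1r; congr (_ * _).
      by f_equal; apply: funext => r; rewrite ffunE.
    by rewrite big1 // => t _; rewrite (@hh_zero _ _ _ ne) ?mulr0 //= eq.
  over.
rewrite -big_mkcond /= sumr_const -[_ *+ #|_|]mulr_natl mulrA.
congr (_ * _ * _); congr (_%:R).
by rewrite -[in RHS](card_ord k) -[in RHS](card_ord m) -(card_inj_ffuns (fintype_ordinal__canonical__fintype_Finite m) (fintype_ordinal__canonical__fintype_Finite k)) cardsE.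
Qed.
End Main.

Lemma count_sup (R : realType) (T : finType) (A : {set T}) k :
  (#|A| <= k <= #|T|)%N ->
  \sum_(S : {set T} | #|S| == k) (A \subset S)%:R =
     ('C(#|T| - #|A|, k - #|A|))%:R :> R.
Proof.
move=> /andP[Ak kT].
transitivity (\sum_(S : {set T} | (#|S| == k) && (A \subset S)) (1 : R)).
  by rewrite big_mkcondr /=; apply: eq_bigr => S _; case: (A \subset S).
rewrite (reindex_inj (@finset.setC_inj T)) /= sumr_const.
have cA := cardsC A.
have -> : (#|T| - #|A| = #|~: A|)%N by lia.
have -> : (k - #|A| = #|~: A| - (#|T| - k))%N by lia.
rewrite bin_sub; last by lia.
rewrite -cards_draws; congr (_%:R); apply: eq_card => B; rewrite !inE finset.subsetC.
have cB := cardsC B.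
rewrite andbC; congr (_ && _).
by apply/eqP/eqP; lia.
Qed.

Arguments hh {R m n}.
Section B.
Variables (R : realType) (m n : nat) (a : 'I_n -> 'cV[R]_m).

Lemma fM_set (N : nat) (lab : 'I_N -> 'I_n) (S : {set 'I_N}) : (0 < m)%N ->
  fM a [seq lab j | j <- enum S] ^+ m =
  \det (\sum_(j : 'I_N) (j \in S)%:R *: (a (lab j) *m (a (lab j))^T)).
Proof.
move=> m0.
have E : \sum_(i <- [seq lab j | j <- enum S]) a i *m (a i)^T =
   \sum_(j : 'I_N) (j \in S)%:R *: (a (lab j) *m (a (lab j))^T).
  rewrite big_map big_enum /= big_mkcond /=; apply: eq_bigr => j _.
  by case: (j \in S); rewrite ?scale1r ?scale0r.
by rewrite /fM E powpow //; apply: det_psd => j; rewrite ler0n.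
Qed.

Lemma prod_in (N : nat) (rho : {ffun 'I_m -> 'I_N}) (S : {set 'I_N}) :
  \prod_(r < m) (rho r \in S)%:R = ((rho @: [set: 'I_m]) \subset S)%:R :> R.
Proof.
case: (boolP (_ \subset S)) => H.
  by rewrite big1 // => r _; rewrite (fintype.subsetP H) // imset_f.
have [y /imsetP [r _ ->] nS] := fintype.subsetPn H.
by rewrite (bigD1 r) //= (negbTE nS) mul0r.
Qed.

Lemma EB_eq (k q : nat) (lab : 'I_(q * k) -> 'I_n) (x : 'I_n -> R) :
  (0 < m)%N -> (m <= k)%N -> (0 < q)%N ->
  (forall i, (#|[set j | lab j == i]|)%:R = q%:R * x i) ->
  EB a lab = ('C(q * k - m, k - m))%:R * (('C(q * k, k))%:R)^-1 *
     (q%:R ^+ m * \det (\sum_i x i *: (a i *m (a i)^T))).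
Proof.
move=> m0 mk q0 hx.
rewrite /EB.
under eq_bigr => S _ do rewrite fM_set // det_expand.
rewrite -big_distrr /= exchange_big /=.
under eq_bigr => rho _.
  have -> : \sum_(S : {set 'I_(q * k)} | #|S| == k)
     \prod_(r < m) (rho r \in S)%:R * hh a (fun r => lab (rho r)) =
     ('C(q * k - m, k - m))%:R * hh a (fun r => lab (rho r)).
    rewrite -big_distrl /=.
    case: (boolP (injectiveb rho)) => [/injectiveP rinj|/injectivePn [r1 [r2 ne eq]]];
      last by rewrite (@hh_zero R m n a _ r1 r2 ne) ?mulr0 //= eq.
    congr (_ * _).
      under eq_bigr => S _ do rewrite prod_in.
      rewrite count_sup; first by rewrite card_imset // cardsT !card_ord.
      by rewrite card_imset // cardsT !card_ord mk /=; apply: leq_trans (leq_pmull _ q0).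
  over.
rewrite /= -big_distrr /=.
have E1 : \sum_(rho : {ffun 'I_m -> 'I_(q * k)}) hh a (fun r => lab (rho r)) =
   \det (\sum_(j : 'I_(q * k)) 1 *: (a (lab j) *m (a (lab j))^T)).
  by rewrite det_expand; apply: eq_bigr => rho _; rewrite big1_eq mul1r.
rewrite E1 mulrA [_^-1 * _]mulrC; congr (_ * _).
have E2 : \sum_(j : 'I_(q * k)) 1 *: (a (lab j) *m (a (lab j))^T) =
    q%:R *: \sum_i x i *: (a i *m (a i)^T).
  rewrite scaler_sumr (partition_big lab predT) //=; apply: eq_bigr => i _.
  rewrite scalerA -hx scaler_nat.
  rewrite (eq_bigr (fun _ => a i *m (a i)^T)); last by move=> j /eqP ->; rewrite scale1r.
  by rewrite sumr_const cardsE; congr (_ *+ _); apply: eq_card => j; rewrite !inE.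
by rewrite E2 detZ.
Qed.
End B.

Section NumB.
Variable R : realType.

Lemma c0E (m k : nat) : (k ^_ m)%:R / k%:R ^+ m = \prod_(i < m) ((k - i)%:R / k%:R) :> R.
Proof. by rewrite ffact_prod natr_prod prodf_div prodr_const card_ord. Qed.

Lemma fact_exp (m : nat) : (m%:R : R) ^+ m <= (m`!)%:R * expR 1 ^+ m.
Proof.
have e1 : (1 : R) <= expR 1 by have := expR_ge1Dx (1 : R); lra.
elim: m => [|m IH]; first by rewrite expr0 mul1r expr0.
have step : ((m.+1)%:R : R) ^+ m <= (m%:R) ^+ m * expR 1.
  case: m IH => [|m] IH; first by rewrite !expr0 mul1r.
  have m0 : (0 : R) < m.+1%:R by rewrite ltr0n.
  have -> : (m.+2%:R : R) = m.+1%:R * (1 + m.+1%:R^-1).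
    by rewrite mulrDr mulr1 mulfV ?gt_eqF // -natr1.
  rewrite exprMn ler_wpM2l ?exprn_ge0 ?ler0n //.
  apply: le_trans (_ : expR (m.+1%:R^-1) ^+ m.+1 <= _).
    apply: lerXn2r; rewrite ?nnegrE ?expR_ge0 //; last exact: expR_ge1Dx.
  by rewrite -expRM_natl mulfV ?gt_eqF.
rewrite exprS factS natrM exprS.
apply: le_trans (_ : (m.+1)%:R * ((m%:R)^+m * expR 1) <= _).
  by rewrite ler_wpM2l ?ler0n.
rewrite -mulrA ler_wpM2l ?ler0n //.
by rewrite [expR 1 * _]mulrC mulrA ler_wpM2r ?expR_ge0.
Qed.

Lemma c0_ge_e (m k : nat) : (m <= k)%N ->
  (expR 1)^-1 ^+ m <= (k ^_ m)%:R / k%:R ^+ m :> R.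
Proof.
move=> mk; rewrite c0E.
have [->|m0] := posnP m; first by rewrite expr0 big_ord0.
have k0 : (0 < k)%N by apply: leq_trans mk.
apply: le_trans (_ : (m ^_ m)%:R / m%:R ^+ m <= _).
  rewrite ffactnn ler_pdivlMr ?exprn_gt0 ?ltr0n // exprVn.
  rewrite ler_pdivrMl ?exprn_gt0 ?expR_gt0 // mulrC.
  exact: fact_exp.
rewrite c0E; apply: ler_prod => i _; apply/andP; split.
  by rewrite divr_ge0 ?ler0n.
have im : (i < m)%N := ltn_ord i.
rewrite ler_pdivrMr ?ltr0n // mulrAC ler_pdivlMr ?ltr0n //.
rewrite -!natrM ler_nat; nia.
Qed.

Lemma c0_ge_eps (m k : nat) (eps : R) : (0 < m)%N -> (m <= k)%N ->
  0 < eps < 1 -> (m%:R - 1) / eps <= k%:R ->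
  (1 - eps) ^+ m <= (k ^_ m)%:R / k%:R ^+ m.
Proof.
move=> m0 mk /andP[e0 e1] hk; rewrite c0E.
have k0 : (0 < k)%N by apply: leq_trans mk.
rewrite -[m in (1 - eps) ^+ m]card_ord -prodr_const.
apply: ler_prod => i _; apply/andP; split; first lra.
have im : (i < m)%N := ltn_ord i.
rewrite ler_pdivlMr ?ltr0n // natrB; last by apply: leq_trans (ltnW im) mk.
have hi : (i%:R : R) <= m%:R - 1.
  by rewrite lerBrDr natr1 ler_nat.
move: hk; rewrite ler_pdivrMr // => hk.
nra.
Qed.

Lemma nat_id (N k m : nat) : (m <= k)%N -> (k <= N)%N ->
  ('C(N, k) * k ^_ m = 'C(N - m, k - m) * N ^_ m)%N.
Proof.
move=> mk kN.
apply/eqP; rewrite -(eqn_pmul2r (fact_gt0 (k - m))); apply/eqP.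
rewrite -mulnA ffact_fact // bin_ffact.
rewrite mulnAC bin_ffact.
apply/eqP; rewrite -(eqn_pmul2r (fact_gt0 (N - k))); apply/eqP.
rewrite ffact_fact // mulnAC.
have -> : (N - k = N - m - (k - m))%N by lia.
rewrite ffact_fact; last by lia.
by rewrite mulnC ffact_fact //; apply: leq_trans kN.
Qed.

Lemma c0_le_B (m k q : nat) : (m <= k)%N -> (0 < q)%N ->
  (k ^_ m)%:R / k%:R ^+ m <=
  ('C(q * k - m, k - m))%:R * (('C(q * k, k))%:R)^-1 * q%:R ^+ m :> R.
Proof.
move=> mk q0.
have kN : (k <= q * k)%N by apply: leq_pmull.
have Cp : (0 < 'C(q * k, k))%N by rewrite bin_gt0.
have [->|m0] := posnP m.
  by rewrite !expr0 !ffactn0 !subn0 divr1 mulr1 mulfV // pnatr_eq0 -lt0n.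
have k0 : (0 < k)%N by apply: leq_trans mk.
rewrite ler_pdivrMr ?exprn_gt0 ?ltr0n // [_ / _ * _]mulrAC [_ / _ * _]mulrAC ler_pdivlMr ?ltr0n //.
rewrite -!natrX -!natrM ler_nat mulnC nat_id //.
rewrite -mulnA leq_mul2l ffact_prod -expnMn -[X in (_ <= X ^ m)%N]muln1.
apply/orP; right.
rewrite -(card_ord m) -prod_nat_const.
rewrite card_ord; apply: leq_prod => i _; rewrite mulnC muln1; exact: leq_subr.
Qed.
End NumB.

Theorem theorem5 (R : realType) (m k n : nat) (a : 'I_n -> 'cV[R]_m)
  (xhat : 'I_n -> rat) :
  (0 < m)%N -> (m <= k)%N -> (k <= n)%N ->
  relax_optimal a k (fun i => ratr (xhat i)) ->
  forall E : R,
    (E = EA a k (fun i => ratr (xhat i)) \/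
     exists (q : nat) (lab : 'I_(q * k) -> 'I_n),
       (0 < q)%N /\
       (forall i, (#|[set j | lab j == i]|)%:R = q%:R * xhat i) /\
       E = EB a lab) ->
    powR E (m%:R)^-1 >= (expR 1)^-1 * wstar a k /\
    (forall eps : R, 0 < eps < 1 -> (m%:R - 1) / eps <= k%:R ->
       powR E (m%:R)^-1 >= (1 - eps) * wstar a k).
Proof.
move=> m0 mk kn [xge [xsum xopt]] E hE.
set x := fun i => ratr (xhat i) : R.
set D := \det (\sum_i x i *: (a i *m (a i)^T)).
have D0 : 0 <= D by exact: (@det_psd R m n a _ x id xge).
have k0 : (0 < k)%N by apply: leq_trans mk.
have rel : relobj a x = powR D (m%:R)^-1 by [].
have ws : wstar a k <= powR D (m%:R)^-1.
  rewrite /wstar; apply: bigmax_le; first exact: powR_ge0.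
  move=> y /eqP ys; rewrite -rel; apply: xopt => [i|]; first exact: ler0n.
  by rewrite -natr_sum ys.
have [c [c0c Ec]] : exists c, (k ^_ m)%:R / k%:R ^+ m <= c /\ E = c * D.
  case: hE => [->|[q [lab [q0 [hl ->]]]]].
    by exists ((k ^_ m)%:R / k%:R ^+ m); split => //; rewrite EA_eq.
  exists (('C(q * k - m, k - m))%:R * (('C(q * k, k))%:R)^-1 * q%:R ^+ m).
  split; first exact: c0_le_B.
  have hx i : (#|[set j | lab j == i]|)%:R = q%:R * x i.
    by have := congr1 (@ratr R) (hl i); rewrite rmorphM /= !ratr_nat.
  by rewrite (@EB_eq R m n a k q lab x m0 mk q0 hx) !mulrA.
have c0 : 0 <= c by apply: le_trans c0c; rewrite divr_ge0 ?exprn_ge0 ?ler0n.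
have key b : 0 <= b -> b ^+ m <= (k ^_ m)%:R / k%:R ^+ m ->
    b * wstar a k <= powR E (m%:R)^-1.
  move=> b0 bm.
  apply: le_trans (ler_wpM2l b0 ws) _.
  have bE : powR (b ^+ m) (m%:R)^-1 = b.
    by rewrite -powR_mulrn // -powRrM mulfV ?powRr1 // pnatr_eq0 -lt0n.
  rewrite -{1}bE -powRM ?exprn_ge0 //.
  apply: ge0_ler_powR; rewrite ?invr_ge0 ?ler0n ?nnegrE ?mulr_ge0 ?exprn_ge0 //.
    by rewrite Ec mulr_ge0.
  by rewrite Ec ler_wpM2r // (le_trans bm c0c).
split.
  by apply: key; [rewrite invr_ge0 expR_ge0 | exact: c0_ge_e].
move=> eps heps hk; apply: key; last exact: c0_ge_eps.
by case/andP: heps => _ ?; rewrite subr_ge0 ltW.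
Qed.
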